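(* Let $\mathrm K$ be a field with a discrete valuation $\nu$, residue field $\mathrm k$ and uniformizer $\pi$, and let $\mathrm{Sp}=\mathrm{Sp}_{\nu,\pi}\colon\mathcal A_\bullet(\mathrm K)\to\mathcal A_\bullet(\mathrm k)$. Then for every $(x_0,\dots,x_n)\in\mathcal A_n(\mathrm K)$, $$\Delta\big(\mathrm{Sp}(x_0,\dots,x_n)\big)=\sum_{j\in\mathbb Z/(n+1)}\sum_{i=1}^{n-1}\mathrm{Sp}(x_j,x_{j+1},\dots,x_{j+i})\wedge\mathrm{Sp}(x_j,x_{j+i+1},\dots,x_{j+n}).$$ That is, $\Delta\circ\mathrm{Sp}=(\mathrm{Sp}\wedge\mathrm{Sp})\circ\Delta$.
   Context: For a field $\mathrm F$ and $n\ge1$, let $\mathcal A_n(\mathrm F)$ be the $\mathbb Q$-vector space generated by tuples $(x_0,\dots,x_n)\in\mathrm F^{n+1}$ modulo the relations $(x_0,x_1,\dots,x_n)=(x_1,\dots,x_n,x_0)$ and $(x,\dots,x)=0$. Set $\mathcal A_\bullet=\bigoplus_{n\ge1}\mathcal A_n$. The cobracket $\Delta\colon\mathcal A_\bullet\to\Lambda^2\mathcal A_\bullet$ is $$\Delta(x_0,\dots,x_n)=\sum_{j\in\mathbb Z/(n+1)}\sum_{i=1}^{n-1}(x_j,x_{j+1},\dots,x_{j+i})\wedge(x_j,x_{j+i+1},\dots,x_{j+n}),$$ with indices taken mod $n+1$. Specialization: put $m=\min_j\nu(x_j)$. Then $\mathrm{Sp}_{\nu,\pi}(x_0,\dots,x_n)=(y_0,\dots,y_n)$,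 where $y_i$ is the residue class in $\mathrm k$ of $x_i\pi^{-m}$ if $\nu(x_i)=m$, and $y_i=0$ if $\nu(x_i)>m$. Each sub-tuple on the right-hand side of the claim is specialized using its own minimum valuation. *)

(* Defs.v *)
From HB Require Import structures.
From mathcomp Require Import all_boot all_order all_algebra.
Set Implicit Arguments. Unset Strict Implicit. Unset Printing Implicit Defensive.
Import Order.TTheory GRing.Theory Num.Theory.
Local Open Scope ring_scope.

(** * Discrete valuation data.
    [nu] is the valuation on K^x (its value at 0 is irrelevant: nu 0 = +oo by
    convention, handled by explicit tests [x != 0]); [pi] a uniformizer;
    [res] restricted to the valuation ring O is a surjective ring morphism
    O -> k whose kernel is the maximal ideal, i.e. k is the residue field. *)
Definition in_O (K : fieldType) (nu : K -> int) (x : K) : bool :=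
  (x == 0) || (0 <= nu x).

Record dvr_data (K k : fieldType) (nu : K -> int) (res : K -> k) (pi : K)
  : Prop := DvrData {
  nuM : forall x y, x != 0 -> y != 0 -> nu (x * y) = nu x + nu y;
  nuD : forall x y, x != 0 -> y != 0 -> x + y != 0 ->
          Num.min (nu x) (nu y) <= nu (x + y);
  pi_neq0 : pi != 0;
  nu_pi : nu pi = 1;
  resD : forall x y, in_O nu x -> in_O nu y -> res (x + y) = res x + res y;
  resM : forall x y, in_O nu x -> in_O nu y -> res (x * y) = res x * res y;
  res1 : res 1 = 1;
  res_eq0 : forall x, in_O nu x -> (res x == 0) = ((x == 0) || (0 < nu x));
  res_surj : forall a : k, exists2 x, in_O nu x & res x = a
}.

(** minimum of the valuations of the nonzero entries (None = +oo) *)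
Fixpoint minv (K : fieldType) (nu : K -> int) (s : seq K) : option int :=
  match s with
  | [::] => None
  | x :: s' =>
      if x == 0 then minv nu s'
      else Some (match minv nu s' with
                 | None => nu x
                 | Some m => Num.min (nu x) m end)
  end.

Definition Sp (K k : fieldType) (nu : K -> int) (res : K -> k) (pi : K)
  (s : seq K) : seq k :=
  match minv nu s with
  | None => map (fun _ => 0) s
  | Some m => map (fun x => if (x != 0) && (nu x == m)
                            then res (x * pi ^ (- m)) else 0) s
  end.

Definition cyc (T : nmodType) (x : seq T) (j : nat) (idx : seq nat) : seq T :=
  [seq nth 0 x ((j + t) %% size x) | t <- idx].

Definition sub1 (T : nmodType) (x : seq T) (j i : nat) : seq T :=
  cyc x j (iota 0 i.+1).
(** (x_j, x_{j+i+1}, ..., x_{j+n}) where size x = n+1 *)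
Definition sub2 (T : nmodType) (x : seq T) (j i : nat) : seq T :=
  cyc x j (0%N :: iota i.+1 ((size x).-1 - i)).

(** An element of the free Q-space on pairs (a,b) is represented by its
    coefficient function (seq T * seq T) -> rat; [pt a b] is the basis
    element of the pair (a,b), i.e. the formal symbol a /\ b. *)
Definition pt (T : eqType) (a b : seq T) : (seq T * seq T) -> rat :=
  fun p => if p == (a, b) then 1 else 0.

(** Generators of the relations defining Lambda^2 A_bullet(T) as a quotient
    of the free Q-space on pairs of tuples of length >= 2:
    antisymmetry, alternation, and the relations of A_bullet (cyclic
    invariance, constant tuples = 0) in either slot. *)
Inductive wrel (T : eqType) : ((seq T * seq T) -> rat) -> Prop :=
| wrel_sym a b : (1 < size a)%N -> (1 < size b)%N ->
    wrel (fun p => pt a b p + pt b a p)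
| wrel_alt a : (1 < size a)%N -> wrel (pt a a)
| wrel_rotl a b : (1 < size a)%N -> (1 < size b)%N ->
    wrel (fun p => pt (rot 1 a) b p - pt a b p)
| wrel_rotr a b : (1 < size a)%N -> (1 < size b)%N ->
    wrel (fun p => pt a (rot 1 b) p - pt a b p)
| wrel_constl (x : T) m b : (1 < m)%N -> (1 < size b)%N ->
    wrel (pt (nseq m x) b)
| wrel_constr a (x : T) m : (1 < size a)%N -> (1 < m)%N ->
    wrel (pt a (nseq m x)).

Definition in_wrel_span (T : eqType) (f : (seq T * seq T) -> rat) : Prop :=
  exists l : seq (rat * ((seq T * seq T) -> rat)),
    (forall i, (i < size l)%N -> wrel (nth (0, fun _ => 0) l i).2) /\
    forall p, f p = \sum_(t <- l) t.1 * t.2 p.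

Definition wedge_eq (T : eqType) (f g : (seq T * seq T) -> rat) : Prop :=
  in_wrel_span (fun p => f p - g p).

Definition Delta (T : nmodType) (x : seq T) : (seq T * seq T) -> rat :=
  fun p => \sum_(j < size x) \sum_(1 <= i < (size x).-1)
             pt (sub1 x j i) (sub2 x j i) p.

(* Main.v *)
Require Import Defs.
From HB Require Import structures.
From mathcomp Require Import all_boot all_order all_algebra.
Import Order.TTheory GRing.Theory Num.Theory.
Local Open Scope ring_scope.
Set Implicit Arguments. Unset Strict Implicit. Unset Printing Implicit Defensive.

Section Span.
Variable T : eqType.
Local Notation S := (@in_wrel_span T).

Lemma S0 : S (fun _ => 0).
Proof. by exists [::]; split=> // p; rewrite big_nil. Qed.

Lemma Sext f g : f =1 g -> S f -> S g.
Proof. by move=> fg [l [H1 H2]]; exists l; split=> // p; rewrite -fg. Qed.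

Lemma SD f g : S f -> S g -> S (fun p => f p + g p).
Proof.
move=> [l1 [H1 E1]] [l2 [H2 E2]]; exists (l1 ++ l2); split.
  move=> i; rewrite size_cat nth_cat => Hs; case: (ltnP i (size l1)) => Hi.
    exact: H1.
  by apply: H2; rewrite ltn_subLR.
by move=> p; rewrite big_cat E1 E2.
Qed.

Lemma SZ c f : S f -> S (fun p => c * f p).
Proof.
move=> [l [H1 E1]]; exists [seq (c * t.1, t.2) | t <- l]; split.
  move=> i; rewrite size_map => Hi.
  by rewrite (nth_map (0, fun _ => 0)) //=; apply: H1.
by move=> p; rewrite big_map E1 mulr_sumr; apply: eq_bigr => t _ /=; rewrite mulrA.
Qed.

Lemma Srel f : wrel f -> S f.
Proof.
move=> H; exists [:: (1, f)]; split; first by case.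
by move=> p; rewrite big_seq1 mul1r.
Qed.

Lemma SN f : S f -> S (fun p => - f p).
Proof. by move=> /(SZ (-1)); apply: (Sext _ )=> p; rewrite mulN1r. Qed.

Lemma SB f g : S f -> S g -> S (fun p => f p - g p).
Proof. by move=> Hf /SN Hg; apply: SD. Qed.

Lemma Ssum (I : Type) (r : seq I) (P : pred I) (F : I -> (seq T * seq T) -> rat) :
  (forall i, P i -> S (F i)) -> S (fun p => \sum_(i <- r | P i) F i p).
Proof.
move=> H; elim: r => [|a r IH].
  by apply: (Sext _ S0) => p; rewrite big_nil.
case Pa: (P a).
  by apply: (Sext _ (SD (H a Pa) IH)) => p; rewrite big_cons Pa.
by apply: (Sext _ IH) => p; rewrite big_cons Pa.
Qed.

Lemma Ssum_seq (I : eqType) (r : seq I) (P : pred I) (F : I -> (seq T * seq T) -> rat) :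
  (forall i, i \in r -> P i -> S (F i)) -> S (fun p => \sum_(i <- r | P i) F i p).
Proof.
move=> H; apply: (Sext _ (@Ssum I r (fun i => (i \in r) && P i) F _)).
  by move=> p /=; rewrite [RHS]big_seq_cond.
by move=> i /andP [] /H.
Qed.

Lemma S_rotr a b m : (1 < size a)%N -> (1 < size b)%N -> (m <= size b)%N ->
  S (fun p => pt a (rot m b) p - pt a b p).
Proof.
move=> Ha Hb; elim: m => [|m IH] Hm.
  by apply: (Sext _ S0) => p; rewrite rot0 subrr.
rewrite rotS //.
have H1 : S (fun p => pt a (rot 1 (rot m b)) p - pt a (rot m b) p).
  by apply: Srel; apply: wrel_rotr; rewrite // size_rot.
apply: (Sext _ (SD H1 (IH (ltnW Hm)))) => p; rewrite addrA subrK //.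
Qed.

End Span.

Lemma S_const0l (k : fieldType) (a b : seq k) : (1 < size a)%N -> (1 < size b)%N ->
  all (fun z => z == 0) a -> in_wrel_span (pt a b).
Proof.
move=> Ha Hb Hz; have -> : a = nseq (size a) 0.
  by apply/all_pred1P.
by apply: Srel; apply: wrel_constl.
Qed.

Lemma S_const0r (k : fieldType) (a b : seq k) : (1 < size a)%N -> (1 < size b)%N ->
  all (fun z => z == 0) b -> in_wrel_span (pt a b).
Proof.
move=> Ha Hb Hz; have -> : b = nseq (size b) 0.
  by apply/all_pred1P.
by apply: Srel; apply: wrel_constr.
Qed.

Section Minv.
Variables (K : fieldType) (nu : K -> int).

Lemma minv_None s : (minv nu s == None) = all (fun z => z == 0) s.
Proof.
by elim: s => [|z s IH] //=; case: ifP.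
Qed.

Lemma minv_Some s m : minv nu s = Some m ->
  (exists2 z, z \in s & (z != 0) && (nu z == m)) /\
  forall z, z \in s -> z != 0 -> m <= nu z.
Proof.
elim: s m => [|z s IH] m //=.
case: ifP => [/eqP z0 /IH [[w ws wm] H]|z0].
  split; first by exists w; rewrite // in_cons ws orbT.
  by move=> u; rewrite in_cons => /orP [/eqP ->|/H //]; rewrite z0 eqxx.
case E: (minv nu s) => [m'|] [<-].
  have [[w ws wm] H] := IH _ E.
  split.
    case: (leP (nu z) m') => Hzm.
      by exists z; rewrite ?mem_head // z0 eqxx.
    by exists w; rewrite ?in_cons ?ws ?orbT // (eqP (proj2 (andP wm))) ?eqxx ?(proj1 (andP wm)).
  move=> u; rewrite in_cons => /orP [/eqP ->|us] u0; first by rewrite ge_min lexx.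
  by rewrite ge_min H ?orbT.
split; first by exists z; rewrite ?mem_head // z0 eqxx.
move=> u; rewrite in_cons => /orP [/eqP -> //|us] u0.
by move: E => /eqP; rewrite minv_None => /allP /(_ _ us) /eqP u0'; rewrite u0' eqxx in u0.
Qed.

Lemma minv_NoneP s : minv nu s = None -> forall z, z \in s -> z = 0.
Proof. by move/eqP; rewrite minv_None => /allP H z /H /eqP. Qed.

Lemma minv_sub t s m : {subset t <= s} -> minv nu s = Some m ->
  (exists2 z, z \in t & (z != 0) && (nu z == m)) -> minv nu t = Some m.
Proof.
move=> ts Es [z zt /andP [z0 /eqP zm]].
have [_ Hs] := minv_Some Es.
case Et: (minv nu t) => [m'|].
  have [[w wt /andP [w0 /eqP wm]] Ht] := minv_Some Et.
  congr Some; apply/le_anti/andP; split.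
    by rewrite -zm; apply: Ht.
  by rewrite -wm; apply: Hs => //; apply: ts.
by rewrite (minv_NoneP Et zt) eqxx in z0.
Qed.

Lemma minv_subN t s : {subset t <= s} -> minv nu s = None -> minv nu t = None.
Proof.
move=> ts /minv_NoneP H; apply/eqP; rewrite minv_None; apply/allP => z /ts /H ->.
by [].
Qed.

Lemma minv_perm s t : s =i t -> minv nu s = minv nu t.
Proof.
move=> st; case Es: (minv nu s) => [m|].
  have [[z zs zm] _] := minv_Some Es.
  by symmetry; apply: (minv_sub _ Es); [move=> u; rewrite st | exists z; rewrite -?st].
by symmetry; apply: (minv_subN _ Es) => u; rewrite st.
Qed.
End Minv.

Section SpSec.
Variables (K k : fieldType) (nu : K -> int) (res : K -> k) (pi : K).
Hypothesis Hdvr : dvr_data nu res pi.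

Definition spf (o : option int) (z : K) : k :=
  match o with
  | None => 0
  | Some m => if (z != 0) && (nu z == m) then res (z * pi ^ (- m)) else 0
  end.

Lemma spf0 o : spf o 0 = 0.
Proof. by case: o => //= m; rewrite eqxx. Qed.

Lemma Sp_spf s : Sp nu res pi s = map (spf (minv nu s)) s.
Proof. by rewrite /Sp; case: (minv nu s). Qed.

Lemma size_Sp s : size (Sp nu res pi s) = size s.
Proof. by rewrite Sp_spf size_map. Qed.

Lemma spf_neq0 m z : spf (Some m) z != 0 -> (z != 0) && (nu z == m).
Proof. by rewrite /=; case: ifP => //; rewrite eqxx. Qed.

Lemma nu1 : nu 1 = 0.
Proof.
have := nuM Hdvr (oner_neq0 K) (oner_neq0 K); rewrite mulr1.
by move=> H; apply: (addrI (nu 1)); rewrite addr0 -H.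
Qed.

Lemma nu_pin (n : nat) : nu (pi ^+ n) = n%:Z.
Proof.
elim: n => [|n IH]; first by rewrite expr0 nu1.
rewrite exprS (nuM Hdvr) ?expf_neq0 ?(pi_neq0 Hdvr) // IH (nu_pi Hdvr).
by rewrite -addn1 PoszD addrC.
Qed.

Lemma nu_piz (m : int) : nu (pi ^ m) = m.
Proof.
have Hp := pi_neq0 Hdvr.
have key (n : nat) : nu (pi ^ (- n%:Z)) = - n%:Z.
  have := nuM Hdvr (expfz_neq0 (- n%:Z) Hp) (expfz_neq0 n%:Z Hp).
  rewrite -expfzDr // addNr expr0z nu1 -exprnP nu_pin => /eqP.
  by rewrite eq_sym addr_eq0 => /eqP.
case: m => n; first by rewrite -exprnP nu_pin.
by rewrite NegzE key.
Qed.

Lemma spf_Some_neq0 m z : z != 0 -> nu z = m -> spf (Some m) z != 0.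
Proof.
move=> z0 zm; rewrite /= z0 zm eqxx /=.
have Hp := pi_neq0 Hdvr.
have w0 : z * pi ^ (- m) != 0 by rewrite mulf_neq0 ?expfz_neq0.
have nw : nu (z * pi ^ (- m)) = 0.
  by rewrite (nuM Hdvr) ?expfz_neq0 // nu_piz zm subrr.
have inO : in_O nu (z * pi ^ (- m)) by rewrite /in_O nw lexx orbT.
by rewrite (res_eq0 Hdvr inO) (negbTE w0) nw ltxx.
Qed.

Lemma minv_Some_has s m : minv nu s = Some m -> has (fun z => spf (Some m) z != 0) s.
Proof.
move=> /minv_Some [[z zs /andP [z0 /eqP zm]] _]; apply/hasP; exists z => //.
exact: spf_Some_neq0.
Qed.

Lemma Sp_sub t s : {subset t <= s} -> has (fun z => spf (minv nu s) z != 0) t ->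
  Sp nu res pi t = map (spf (minv nu s)) t.
Proof.
move=> ts; case Es: (minv nu s) => [m|]; last by move=> /hasP [z _]; rewrite eqxx.
move=> /hasP [z zt /spf_neq0 Hz].
by rewrite Sp_spf (minv_sub ts Es) //; exists z.
Qed.

Lemma Sp_rot i s : Sp nu res pi (rot i s) = rot i (Sp nu res pi s).
Proof.
by rewrite !Sp_spf map_rot (minv_perm nu (mem_rot i s)).
Qed.

End SpSec.

Section Cyc.
Variable T : nmodType.
Local Open Scope nat_scope.

Lemma cyc_cons (x : seq T) a t L :
  cyc x a (t :: L) = nth 0%R x ((a + t) %% size x) :: cyc x a L.
Proof. by []. Qed.

Lemma cyc_cat (x : seq T) a L1 L2 : cyc x a (L1 ++ L2) = cyc x a L1 ++ cyc x a L2.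
Proof. by rewrite /cyc map_cat. Qed.

Lemma cyc_ext (x : seq T) a b (f g : nat -> nat) L :
  (forall t, (a + f t) %% size x = (b + g t) %% size x) ->
  cyc x a (map f L) = cyc x b (map g L).
Proof. by move=> H; rewrite /cyc -!map_comp; apply: eq_map => t /=; rewrite H. Qed.

Lemma cyc_sub (x : seq T) a L : (0 < size x)%N -> {subset cyc x a L <= x}.
Proof. by move=> x0 z /mapP [t _ ->]; apply: mem_nth; rewrite ltn_pmod. Qed.

Lemma modn_eqD a b c d : a %% d = b %% d -> (a + c) %% d = (b + c) %% d.
Proof. by move=> H; rewrite -modnDml H modnDml. Qed.

Lemma cyc_full0 (x : seq T) a : (0 < size x)%N ->
  all (fun z => z == 0%R) (cyc x a (iota 0 (size x))) -> all (fun z => z == 0%R) x.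
Proof.
move=> x0 /allP H; apply/allP => z /(nthP 0%R) [q qs <-].
set N := size x in x0 qs H *.
apply: H; apply/mapP; exists ((N - a %% N + q) %% N); first by rewrite mem_iota ltn_pmod.
congr nth; rewrite modnDmr addnA.
rewrite -(modn_eqD _ (modnDml 0 _ _)) ?add0n //.
have aN : (a %% N <= N)%N by rewrite ltnW // ltn_pmod.
rewrite mod0n add0n ?plusE {1}(divn_eq a N) -!addnA (addnA (a %% N)) subnKC // addnA -mulSnr modnMDl.
by rewrite modn_small.
Qed.
End Cyc.

Lemma cyc_map (T1 T2 : nmodType) (f : T1 -> T2) (x : seq T1) a L :
  (f 0 = 0)%R -> cyc (map f x) a L = map f (cyc x a L).
Proof.
move=> f0; rewrite /cyc size_map -map_comp; apply: eq_map => t /=.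
case: (ltnP ((a + t) %% size x)%N (size x)) => H; first by rewrite (nth_map 0%R).
by rewrite !nth_default ?size_map.
Qed.

Section Idx.
Variable T : nmodType.
Local Open Scope nat_scope.
Variables (z : seq T) (n i j j' : nat).
Hypotheses (Hz : size z = n.+1) (Hi : i <= n) (Hj : j' %% n.+1 = (j + i) %% n.+1).

Lemma sub2E : sub2 z j i = cyc z j (0 :: iota i.+1 (n - i)).
Proof. by rewrite /sub2 Hz. Qed.

Lemma cover : cyc z j (iota 0 (size z)) = sub1 z j i ++ behead (sub2 z j i).
Proof. by rewrite sub2E /sub1 -cyc_cat Hz -iotaD addSn subnKC. Qed.

Lemma phi1 : sub1 z j' (n - i) = cyc z j (i :: iota i.+1 (n - i)).
Proof.
rewrite /sub1 -(map_id (iota 0 _)).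
have -> : i :: iota i.+1 (n - i) = map (addn i) (iota 0 (n - i).+1).
  by rewrite -iotaDl addn0.
by apply: cyc_ext => t; rewrite Hz addnA; apply: modn_eqD.
Qed.

Lemma phi2 : sub2 z j' (n - i) = rot i (sub1 z j i).
Proof.
rewrite /sub2 Hz /= subKn // /sub1.
have -> : iota 0 i.+1 = iota 0 i ++ [:: i] by rewrite -addn1 iotaD.
have Hs : size (cyc z j (iota 0 i)) = i by rewrite size_map size_iota.
rewrite cyc_cat -{3}Hs rot_size_cat /= Hz addn0 Hj.
congr cons.
rewrite -[in RHS](map_id (iota 0 i)) -[in LHS](addn0 (n - i).+1) iotaDl.
apply: cyc_ext => t; rewrite Hz ?plusE addnA (modn_eqD _ (modn_eqD _ Hj)).
by rewrite -(addnA j) addnS subnKC // addnAC modnDr.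
Qed.
End Idx.

Lemma all_rot (T : eqType) (a : pred T) i (s : seq T) : all a (rot i s) = all a s.
Proof.
apply/allP/allP => H z zs; apply: H.
  by rewrite mem_rot.
by move: zs; rewrite mem_rot.
Qed.

Theorem lemma2p1 (K k : fieldType) (nu : K -> int) (res : K -> k) (pi : K)
  (Hdvr : dvr_data nu res pi) (n : nat) (x : seq K) :
  (1 <= n)%N -> size x = n.+1 ->
  wedge_eq (Delta (Sp nu res pi x))
    (fun p => \sum_(j < n.+1) \sum_(1 <= i < n)
        pt (Sp nu res pi (sub1 x j i)) (Sp nu res pi (sub2 x j i)) p).
Proof.
move=> n1 Hx.
set y := Sp nu res pi x.
set sy := spf nu res pi (minv nu x).
have x0 : (0 < size x)%N by rewrite Hx.
have Hy : size y = n.+1 by rewrite /y size_Sp.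
have ycyc a L : cyc y a L = map sy (cyc x a L).
  by rewrite /y Sp_spf cyc_map // spf0.
have SpY a L : ~~ all (fun z => z == 0) (cyc y a L) ->
    Sp nu res pi (cyc x a L) = cyc y a L.
  rewrite ycyc all_map -has_predC => H.
  apply: Sp_sub; first exact: cyc_sub.
  by apply: sub_has H => z /=.
pose L (j i : nat) := pt (sub1 y j i) (sub2 y j i).
pose R (j i : nat) := pt (Sp nu res pi (sub1 x j i)) (Sp nu res pi (sub2 x j i)).
pose A (j i : nat) := all (fun z => z == 0) (sub1 y j i).
pose B (j i : nat) := all (fun z => z == 0) (sub2 y j i).
pose C (j i : nat) p := (if A j i then R j i p else 0) + (if B j i && ~~ A j i then R j i p else 0).
have sz1 (z : seq k) j i : size z = n.+1 -> size (sub1 z j i) = i.+1.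
  by move=> _; rewrite size_map size_iota.
have sz2 (z : seq k) j i : size z = n.+1 -> size (sub2 z j i) = (n - i).+1.
  by move=> Hz; rewrite size_map /= size_iota Hz.
have step1 j i : (1 <= i < n)%N -> in_wrel_span (fun p => L j i p - R j i p + C j i p).
  move=> /andP [i1 iN].
  have s1 : (1 < size (sub1 y j i))%N by rewrite sz1.
  have s2 : (1 < size (sub2 y j i))%N by rewrite sz2 // ltnS subn_gt0.
  rewrite /C; case HA: (A j i) => /=.
    apply: (Sext _ (S_const0l s1 s2 HA)) => p; rewrite /L.
    by rewrite andbF addr0 subrK.
  case HB: (B j i) => /=.
    apply: (Sext _ (S_const0r s1 s2 HB)) => p; rewrite /L.
    by rewrite add0r subrK.
  have E1 := SpY _ _ (negbT HA); have E2 := SpY _ _ (negbT HB).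
  have eR : R j i = L j i.
    by rewrite /R /L /sub1 /sub2 E1 Hx -Hy E2.
  apply: (Sext _ (@S0 _)) => p /=.
  by rewrite eR subrr addr0.
have szx1 j i : size (sub1 x j i) = i.+1 by rewrite size_map size_iota.
have szx2 j i : size (sub2 x j i) = (n - i).+1 by rewrite size_map /= size_iota Hx.
pose G (j i : nat) p := if B j i && ~~ A j i then R j i p else 0.
have step3 j i j' : (1 <= i < n)%N -> (j' %% n.+1 = (j + i) %% n.+1)%N ->
    in_wrel_span (fun p => (if A j i then R j i p else 0) + G j' (n - i)%N p).
  move=> /andP [i1 iN] Hj; have Hin : (i <= n)%N by rewrite ltnW.
  have eB' : B j' (n - i)%N = A j i by rewrite /B /A (phi2 Hy Hin Hj) all_rot.
  rewrite /G eB'; case HA: (A j i) => /=; last first.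
    by apply: (Sext _ (@S0 _)) => p; rewrite addr0.
  have h0 : nth 0 y ((j + 0) %% size y) == 0.
    by apply: (allP HA); apply: (map_f (fun t => nth 0 y ((j + t) %% size y))); rewrite mem_iota.
  have hi : nth 0 y ((j + i) %% size y) == 0.
    apply: (allP HA); apply: (map_f (fun t => nth 0 y ((j + t) %% size y))).
    by rewrite mem_iota add0n ltnSn.
  have e12 : sub1 y j' (n - i) = sub2 y j i.
    by rewrite (phi1 Hy Hj) (sub2E i j Hy) !cyc_cons (eqP h0) (eqP hi).
  have eA' : A j' (n - i)%N = B j i by rewrite /A /B e12.
  rewrite eA'; case HB: (B j i) => /=.
    have yz : all (fun z => z == 0) y.
      apply: (cyc_full0 (a := j)); first by rewrite Hy.
      rewrite (cover j Hy Hin) all_cat; apply/andP; split; first exact: HA.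
      by move: HB; rewrite /B (sub2E i j Hy) /= => /andP [].
    have mN : minv nu x = None.
      case E: (minv nu x) => [m|] //.
      have /hasP [z zx nz] := minv_Some_has Hdvr E.
      have := allP yz (sy z); rewrite /y Sp_spf -/sy map_f // /sy E => /(_ isT) /eqP zz.
      by rewrite zz eqxx in nz.
    have ss1 : (1 < size (Sp nu res pi (sub1 x j i)))%N by rewrite size_Sp szx1.
    have ss2 : (1 < size (Sp nu res pi (sub2 x j i)))%N by rewrite size_Sp szx2 ltnS subn_gt0.
    apply: (Sext _ (S_const0l ss1 ss2 _)).
      by move=> p; rewrite addr0.
    rewrite Sp_spf (minv_subN (cyc_sub x0) mN).
    by apply/allP => z /mapP [w _ ->].
  set a := Sp nu res pi (sub1 x j i); set b := sub2 y j i.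
  have eb : Sp nu res pi (sub2 x j i) = b.
    by rewrite /b /sub2 Hx -Hy SpY //; move: HB; rewrite /B /sub2 => ->.
  have eb' : Sp nu res pi (sub1 x j' (n - i)) = b.
    by rewrite /b -e12 /sub1 SpY // -/(sub1 y j' (n - i)) e12; move: HB; rewrite /B => ->.
  have ea' : Sp nu res pi (sub2 x j' (n - i)) = rot i a.
    by rewrite (phi2 Hx Hin Hj) Sp_rot.
  have sa : (1 < size a)%N by rewrite size_Sp szx1.
  have sb : (1 < size b)%N by rewrite sz2 // ltnS subn_gt0.
  have sia : (i <= size a)%N by rewrite size_Sp szx1.
  have Hr := S_rotr sb sa sia.
  have Hs := Srel (wrel_sym sa sb).
  apply: (Sext _ (SD Hr Hs)) => p.
  by rewrite /R eb eb' ea' -/a addrA addrAC subrK addrC.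
have step2 : in_wrel_span (fun p => \sum_(j < n.+1) \sum_(1 <= i < n) C j i p).
  have EG p : \sum_(j < n.+1) \sum_(1 <= i < n) G j i p =
      \sum_(j < n.+1) \sum_(1 <= i < n) G (val (inZp i + j : 'I_n.+1)) (n - i)%N p.
    rewrite exchange_big [RHS]exchange_big /= big_nat_rev /=.
    apply: eq_bigr => i _; rewrite add1n subSS.
    by rewrite (reindex_inj (addrI (inZp i))).
  have H3 : in_wrel_span (fun p => \sum_(j < n.+1) \sum_(1 <= i < n)
      ((if A j i then R j i p else 0) + G (val (inZp i + j : 'I_n.+1)) (n - i)%N p)).
    apply: Ssum => j _; apply: Ssum_seq => i Hi _; apply: step3.
      by rewrite mem_index_iota in Hi.
    by rewrite /= modn_mod modnDml addnC.
  apply: (Sext _ H3) => p.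
  rewrite /C; under eq_bigr => j _ do rewrite big_split /=.
  rewrite big_split /= -EG.
  by under [RHS]eq_bigr => j _ do rewrite big_split /=; rewrite big_split.
rewrite /wedge_eq /Delta Hy.
have H1 : in_wrel_span (fun p => \sum_(j < n.+1) \sum_(1 <= i < n) (L j i p - R j i p + C j i p)).
  apply: Ssum => j _; apply: Ssum_seq => i Hi _; apply: step1.
  by rewrite mem_index_iota in Hi.
apply: (Sext _ (SB H1 step2)).
move=> p; rewrite -!sumrB; apply: eq_bigr => j _; rewrite -!sumrB.
by apply: eq_bigr => i _; rewrite addrK.
Qed.
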